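(* Let $H_0,H_1$ be complex Hilbert spaces, $G$ a densely defined closed operator from $H_0$ into $H_1$ and $D$ a densely defined closed operator from $H_1$ into $H_0$ with $-G^*\subset D$, and assume the inclusion $\mathrm{dom}(G)\subset H_0$ is compact. Let $a,a_1,a_2,\ldots\in\mathcal L(H_1)$ and $\mu>0$ with $\mathrm{Re}\,a_n\ge\mu I$ for all $n$ and $\mathrm{Re}\,a\ge\mu I$. Suppose that $(a_n)$ converges to $a$ independent of the boundary conditions. Then $(\iota^*a_n\iota)^{-1}\to(\iota^*a\iota)^{-1}$ in the weak operator topology on $\mathcal L(\mathrm{ran}(G))$.
   Context: $\mathring G=-D^*$. Domains carry graph inner products, e.g. $(u,v)_{\mathrm{dom}(G)}=(u,v)_{H_0}+(Gu,Gv)_{H_1}$. Under the compactness assumption $\mathrm{ran}(G)$ is closed in $H_1$; it carries the $H_1$-norm, $\iota\colon\mathrm{ran}(G)\hookrightarrow H_1$ is the inclusion and $\iota^*$ the orthogonal projection of $H_1$ onto $\mathrm{ran}(G)$; $\iota^*a\iota$ and $\iota^*a_n\iota$ are invertible on $\mathrm{ran}(G)$. The sequence $(a_n)$ converges to $a$ independent of the boundary conditions if for every strictly increasing $(n_k)$ in $\mathbb N$, all $f,f_k\in H_0$ and all $u,u_k\in\mathrm{dom}(G)$ with $f_k\to f$ weakly in $H_0$, $u_k\to u$ weakly in $\mathrm{dom}(G)$, and $a_{n_k}Gu_k\in\mathrm{dom}(D)$ with $-Da_{n_k}Gu_k=f_k$ for all $k$, it follows that $a_{n_k}Gu_k\to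 aGu$ weakly in $H_1$. *)

(* Defs.v *)
From mathcomp Require Import all_boot all_order all_algebra.
From mathcomp Require Import all_classical all_reals.
From mathcomp Require Import complex.
Set Implicit Arguments. Unset Strict Implicit. Unset Printing Implicit Defensive.
Import Order.TTheory GRing.Theory Num.Theory.
Local Open Scope ring_scope.

Definition cmod (R : realType) (z : complex R) : R :=
  Num.sqrt (complex.Re z ^+ 2 + complex.Im z ^+ 2).

Definition ccvg (R : realType) (z : nat -> complex R) (l : complex R) : Prop :=
  forall eps : R, 0 < eps -> exists N : nat, forall k, (N <= k)%N -> cmod (z k - l) < eps.

Definition hnorm (R : realType) (V : lmodType (complex R))
  (ip : V -> V -> complex R) (x : V) : R := Num.sqrt (complex.Re (ip x x)).

Definition is_hilbert (R : realType) (V : lmodType (complex R))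
  (ip : V -> V -> complex R) : Prop :=
  [/\ (forall (c : complex R) (x y z : V), ip (c *: x + y) z = c * ip x z + ip y z),
      (forall x y : V, ip y x = conjc (ip x y)),
      (forall x : V, complex.Im (ip x x) = 0 /\ 0 <= complex.Re (ip x x)),
      (forall x : V, ip x x = 0 -> x = 0) &
      (forall u : nat -> V,
         (forall eps : R, 0 < eps -> exists N : nat, forall m n, (N <= m)%N -> (N <= n)%N ->
              hnorm ip (u m - u n) < eps) ->
         exists l : V, forall eps : R, 0 < eps -> exists N : nat, forall n, (N <= n)%N ->
              hnorm ip (u n - l) < eps)].

Definition ncvg (R : realType) (V : lmodType (complex R)) (ip : V -> V -> complex R)
  (u : nat -> V) (l : V) : Prop :=
  forall eps : R, 0 < eps -> exists N : nat, forall n, (N <= n)%N -> hnorm ip (u n - l) < eps.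

Definition wcvg (R : realType) (V : lmodType (complex R)) (ip : V -> V -> complex R)
  (u : nat -> V) (l : V) : Prop :=
  forall v : V, ccvg (fun n => ip (u n) v) (ip l v).

(* An operator from V to W is given by a domain dA and a map A : V -> W
   (whose values outside dA are irrelevant). *)
Definition lin_op (R : realType) (V W : lmodType (complex R))
  (dA : V -> Prop) (A : V -> W) : Prop :=
  dA 0 /\ forall (c : complex R) (x y : V), dA x -> dA y ->
     dA (c *: x + y) /\ A (c *: x + y) = c *: A x + A y.

Definition densely_defined (R : realType) (V : lmodType (complex R))
  (ipV : V -> V -> complex R) (dA : V -> Prop) : Prop :=
  forall (x : V) (eps : R), 0 < eps -> exists y, dA y /\ hnorm ipV (x - y) < eps.

Definition closed_op (R : realType) (V W : lmodType (complex R))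
  (ipV : V -> V -> complex R) (ipW : W -> W -> complex R)
  (dA : V -> Prop) (A : V -> W) : Prop :=
  forall (x : nat -> V) (l : V) (m : W), (forall n, dA (x n)) ->
    ncvg ipV x l -> ncvg ipW (fun n => A (x n)) m -> dA l /\ A l = m.

Definition densely_defined_closed (R : realType) (V W : lmodType (complex R))
  (ipV : V -> V -> complex R) (ipW : W -> W -> complex R)
  (dA : V -> Prop) (A : V -> W) : Prop :=
  [/\ lin_op dA A, densely_defined ipV dA & closed_op ipV ipW dA A].

(* graph of the adjoint: y \in dom(A^* ) and A^* y = z *)
Definition adj_graph (R : realType) (V W : lmodType (complex R))
  (ipV : V -> V -> complex R) (ipW : W -> W -> complex R)
  (dA : V -> Prop) (A : V -> W) (y : W) (z : V) : Prop :=
  forall x : V, dA x -> ipW (A x) y = ipV x z.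

Definition graph_ip (R : realType) (V W : lmodType (complex R))
  (ipV : V -> V -> complex R) (ipW : W -> W -> complex R)
  (A : V -> W) (u v : V) : complex R := ipV u v + ipW (A u) (A v).

Definition compact_embedding (R : realType) (V W : lmodType (complex R))
  (ipV : V -> V -> complex R) (ipW : W -> W -> complex R)
  (dA : V -> Prop) (A : V -> W) : Prop :=
  forall u : nat -> V, (forall n, dA (u n)) ->
    (exists M : R, forall n, hnorm (graph_ip ipV ipW A) (u n) <= M) ->
    exists (phi : nat -> nat) (l : V), {homo phi : i j / (i < j)%N} /\
      ncvg ipV (fun k => u (phi k)) l.

Definition wcvg_dom (R : realType) (V W : lmodType (complex R))
  (ipV : V -> V -> complex R) (ipW : W -> W -> complex R)
  (dA : V -> Prop) (A : V -> W) (u : nat -> V) (l : V) : Prop :=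
  (forall n, dA (u n)) /\ dA l /\
  forall v, dA v -> ccvg (fun n => graph_ip ipV ipW A (u n) v) (graph_ip ipV ipW A l v).

Definition bounded_op (R : realType) (V : lmodType (complex R))
  (ip : V -> V -> complex R) (a : V -> V) : Prop :=
  (forall (c : complex R) (x y : V), a (c *: x + y) = c *: a x + a y) /\
  exists M : R, forall x, hnorm ip (a x) <= M * hnorm ip x.

Definition re_ge (R : realType) (V : lmodType (complex R))
  (ip : V -> V -> complex R) (a : V -> V) (mu : R) : Prop :=
  forall x : V, mu * hnorm ip x ^+ 2 <= complex.Re (ip (a x) x).

Definition ran (V W : Type) (dA : V -> Prop) (A : V -> W) (y : W) : Prop :=
  exists x, dA x /\ A x = y.

(* orthogonal projection iota^* of W onto ran(A) *)
Definition proj_ran (R : realType) (V W : lmodType (complex R))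
  (ipW : W -> W -> complex R) (dA : V -> Prop) (A : V -> W) (y : W) : W :=
  xget 0 (fun p : W => ran dA A p /\ forall q, ran dA A q -> ipW (y - p) q = 0).

(* (iota^* a iota)^{-1} y, for y in ran(A): the unique x in ran(A) with
   iota^*(a x) = y *)
Definition compr_inv (R : realType) (V W : lmodType (complex R))
  (ipW : W -> W -> complex R) (dA : V -> Prop) (A : V -> W) (a : W -> W) (y : W) : W :=
  xget 0 (fun x : W => ran dA A x /\ proj_ran ipW dA A (a x) = y).

Definition cvg_indep_bc (R : realType) (H0 H1 : lmodType (complex R))
  (ip0 : H0 -> H0 -> complex R) (ip1 : H1 -> H1 -> complex R)
  (dG : H0 -> Prop) (G : H0 -> H1) (dD : H1 -> Prop) (D : H1 -> H0)
  (an : nat -> H1 -> H1) (a : H1 -> H1) : Prop :=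
  forall (nk : nat -> nat) (f : H0) (fk : nat -> H0) (u : H0) (uk : nat -> H0),
    {homo nk : i j / (i < j)%N} ->
    wcvg ip0 fk f ->
    wcvg_dom ip0 ip1 dG G uk u ->
    (forall k, dD (an (nk k) (G (uk k))) /\ - D (an (nk k) (G (uk k))) = fk k) ->
    wcvg ip1 (fun k => an (nk k) (G (uk k))) (a (G u)).

(* Main.v *)
Require Import Defs.
From mathcomp Require Import all_boot all_order all_algebra.
From mathcomp Require Import all_classical all_reals.
From mathcomp Require Import complex.
From mathcomp Require Import ring lra.
Set Implicit Arguments. Unset Strict Implicit. Unset Printing Implicit Defensive.
Import Order.TTheory GRing.Theory Num.Theory.
Local Open Scope ring_scope.

Section Cplx.
Variable R : realType.
Local Notation C := (complex R).

Lemma normcE' (z : C) : `|z| = ((cmod z)%:C)%C.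
Proof. by case: z. Qed.

Lemma cmodE (z : C) : cmod z = complex.Re `|z|.
Proof. by rewrite normcE'. Qed.

Lemma cmod_ge0 (z : C) : 0 <= cmod z.
Proof. by rewrite /cmod sqrtr_ge0. Qed.

Lemma cmodM (a b : C) : cmod (a * b) = cmod a * cmod b.
Proof. by apply: complexI; rewrite rmorphM /= -!normcE' normrM. Qed.

Lemma cmodD (a b : C) : cmod (a + b) <= cmod a + cmod b.
Proof. by rewrite -lecR rmorphD /= -!normcE' ler_normD. Qed.

Lemma cmodN (a : C) : cmod (- a) = cmod a.
Proof. by apply: complexI; rewrite -!normcE' normrN. Qed.

Lemma cmodB (a b : C) : cmod (a - b) = cmod (b - a).
Proof. by rewrite -cmodN opprB. Qed.

Lemma cmod0 : cmod (0 : C) = 0.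
Proof. by apply: complexI; rewrite -!normcE' normr0. Qed.

Lemma cmod_eq0 (a : C) : cmod a = 0 -> a = 0.
Proof. by move=> h; apply/eqP; rewrite -normr_eq0 normcE' h. Qed.

Lemma cmodJ (a : C) : cmod (conjc a) = cmod a.
Proof. by case: a => x y; rewrite /cmod /= sqrrN. Qed.

Lemma cmodR (x : R) : cmod (x%:C)%C = `|x|.
Proof. by rewrite /cmod /= expr0n /= addr0 sqrtr_sqr. Qed.

Lemma cmod_Re (a : C) : `|complex.Re a| <= cmod a.
Proof. by rewrite -lecR -normcE'; apply: normc_ge_Re. Qed.

Lemma cmod_Im (a : C) : `|complex.Im a| <= cmod a.
Proof.
case: a => x y; rewrite /cmod /= -sqrtr_sqr ler_wsqrtr //.
by rewrite lerDr sqr_ge0.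
Qed.

Lemma cmod_le_ReIm (a : C) : cmod a <= `|complex.Re a| + `|complex.Im a|.
Proof.
case: a => x y; rewrite /cmod /=.
rewrite -(@ler_pXn2r _ 2) ?nnegrE ?sqrtr_ge0 ?addr_ge0 // sqr_sqrtr ?addr_ge0 ?sqr_ge0 //.
rewrite sqrrD !real_normK ?num_real // -addrA lerD2l lerDr mulrn_wge0 // mulr_ge0 //.
Qed.

Lemma cmod_sqr (a : C) : ((cmod a ^+ 2)%:C)%C = a * conjc a.
Proof. by rewrite rmorphXn /= -normcE' sqr_normc. Qed.

Lemma ReD (a b : C) : complex.Re (a + b) = complex.Re a + complex.Re b.
Proof. by case: a; case: b. Qed.
Lemma ImD (a b : C) : complex.Im (a + b) = complex.Im a + complex.Im b.
Proof. by case: a; case: b. Qed.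
Lemma ReN (a : C) : complex.Re (- a) = - complex.Re a.
Proof. by case: a. Qed.
Lemma ReR (x : R) : complex.Re (x%:C)%C = x.
Proof. by []. Qed.
Lemma ReJ (a : C) : complex.Re (conjc a) = complex.Re a.
Proof. by case: a. Qed.

Lemma conjcM (a b : C) : conjc (a * b) = conjc a * conjc b.
Proof. exact: rmorphM. Qed.
Lemma conjcD (a b : C) : conjc (a + b) = conjc a + conjc b.
Proof. exact: rmorphD. Qed.
Lemma conjcN (a : C) : conjc (- a) = - conjc a.
Proof. exact: rmorphN. Qed.
Lemma conjc1' : conjc (1 : C) = 1.
Proof. exact: rmorph1. Qed.
Lemma conjcR (s : R) : conjc ((s%:C)%C) = (s%:C)%C.
Proof. by apply/eqP; rewrite eq_complex /= oppr0 !eqxx. Qed.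
Lemma conjcK' (a : C) : conjc (conjc a) = a.
Proof. by case: a => x y; rewrite /= opprK. Qed.

End Cplx.

Section Hilbert.
Variable R : realType.
Local Notation C := (complex R).
Variable V : lmodType C.
Variable ip : V -> V -> C.
Hypothesis hH : is_hilbert ip.
Local Notation nm := (hnorm ip).

Lemma ip_lin c x y z : ip (c *: x + y) z = c * ip x z + ip y z.
Proof. by case: hH => h _ _ _ _; apply: h. Qed.
Lemma ip_sym x y : ip y x = conjc (ip x y).
Proof. by case: hH => _ h _ _ _; apply: h. Qed.
Lemma ip_pos x : complex.Im (ip x x) = 0 /\ 0 <= complex.Re (ip x x).
Proof. by case: hH => _ _ h _ _; apply: h. Qed.
Lemma ip_def x : ip x x = 0 -> x = 0.
Proof. by case: hH => _ _ _ h _; apply: h. Qed.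

Lemma ip0l z : ip 0 z = 0.
Proof.
have := ip_lin 1 0 0 z; rewrite scaler0 addr0 mul1r => h.
by apply: (addrI (ip 0 z)); rewrite addr0 -h.
Qed.
Lemma ipDl x y z : ip (x + y) z = ip x z + ip y z.
Proof. by have := ip_lin 1 x y z; rewrite scale1r mul1r. Qed.
Lemma ipZl c x z : ip (c *: x) z = c * ip x z.
Proof. by rewrite -[c *: x]addr0 ip_lin ip0l addr0. Qed.
Lemma ipNl x z : ip (- x) z = - ip x z.
Proof. by rewrite -scaleN1r ipZl mulN1r. Qed.
Lemma ipBl x y z : ip (x - y) z = ip x z - ip y z.
Proof. by rewrite ipDl ipNl. Qed.
Lemma ip0r z : ip z 0 = 0.
Proof. by rewrite ip_sym ip0l conjc0. Qed.
Lemma ipDr x y z : ip z (x + y) = ip z x + ip z y.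
Proof. by rewrite ip_sym ipDl rmorphD /= -!ip_sym. Qed.
Lemma ipZr c x z : ip z (c *: x) = conjc c * ip z x.
Proof. by rewrite ip_sym ipZl rmorphM /= -ip_sym. Qed.
Lemma ipNr x z : ip z (- x) = - ip z x.
Proof. by rewrite ip_sym ipNl rmorphN /= -ip_sym. Qed.
Lemma ipBr x y z : ip z (x - y) = ip z x - ip z y.
Proof. by rewrite ipDr ipNr. Qed.

Lemma hnorm_ge0 x : 0 <= nm x.
Proof. exact: sqrtr_ge0. Qed.

Lemma hnorm_sqr x : nm x ^+ 2 = complex.Re (ip x x).
Proof. by rewrite /hnorm sqr_sqrtr //; case: (ip_pos x). Qed.

Lemma ip_self x : ip x x = ((nm x ^+ 2)%:C)%C.
Proof.
rewrite hnorm_sqr; case: (ip_pos x) => hi _.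
by move: (ip x x) hi => [a b] /= ->.
Qed.

Lemma hnorm0 : nm 0 = 0.
Proof. by rewrite /hnorm ip0l /= sqrtr0. Qed.

Lemma hnorm_eq0 x : nm x = 0 -> x = 0.
Proof.
move=> h; apply: ip_def; rewrite ip_self h expr0n /=.
by [].
Qed.

Lemma hnormZ c x : nm (c *: x) = cmod c * nm x.
Proof.
apply/eqP; rewrite -(@eqrXn2 _ 2) // ?mulr_ge0 ?cmod_ge0 ?hnorm_ge0 ?sqrtr_ge0 //.
apply/eqP; apply: complexI.
rewrite -ip_self ipZl ipZr ip_self exprMn [RHS]rmorphM /= cmod_sqr.
by rewrite mulrA.
Qed.

Lemma hnormN x : nm (- x) = nm x.
Proof. by rewrite -scaleN1r hnormZ cmodN /cmod /= expr1n expr0n /= addr0 sqrtr1 mul1r. Qed.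

Lemma hnormB x y : nm (x - y) = nm (y - x).
Proof. by rewrite -hnormN opprB. Qed.

Lemma ip_expand x y : complex.Re (ip (x + y) (x + y)) =
  nm x ^+ 2 + nm y ^+ 2 + 2 * complex.Re (ip x y).
Proof.
rewrite ipDl !ipDr !ReD -!hnorm_sqr [ip y x]ip_sym ReJ.
by rewrite mulr2n mulrDl mul1r; lra.
Qed.

Lemma cauchy_schwarz x y : cmod (ip x y) <= nm x * nm y.
Proof.
have [->|y0] := eqVneq y 0; first by rewrite ip0r hnorm0 cmod0 mulr0.
have b0 : nm y ^+ 2 != 0.
  by rewrite expf_eq0 /=; apply/eqP => /hnorm_eq0 /eqP; rewrite (negbTE y0).
set t := ip x y / ((nm y ^+ 2)%:C)%C.
have key : ip (x - t *: y) (x - t *: y) =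
   ip x x - ip x y * conjc (ip x y) / ((nm y ^+ 2)%:C)%C.
  rewrite ipBl !ipBr !ipZl !ipZr [ip y x]ip_sym ip_self [ip y y]ip_self.
  have cj : forall (a : C) (r : R), conjc (a / (r%:C)%C) = conjc a / (r%:C)%C.
    move=> a r; rewrite -fmorphV (rmorphM conjc); congr (_ * _).
    by apply/eqP; rewrite eq_complex /= oppr0 !eqxx.
  rewrite /t cj.
  have hb : ((nm y ^+ 2)%:C)%C != 0 :> C by rewrite eq_complex /= negb_and b0.
  move: hb; generalize ((nm y ^+ 2)%:C)%C ((nm x ^+ 2)%:C)%C (ip x y) (conjc (ip x y)).
  by move=> b a z w hb; field.
have : 0 <= ip (x - t *: y) (x - t *: y) by rewrite ip_self lecR sqr_ge0.
rewrite key -cmod_sqr subr_ge0 ip_self.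
have hb : 0 < ((nm y ^+ 2)%:C)%C :> C by rewrite ltcR lt_def b0 sqr_ge0.
rewrite ler_pdivrMr // -!rmorphM /= lecR -exprMn => h.
by rewrite -(@ler_pXn2r _ 2) ?nnegrE ?cmod_ge0 ?mulr_ge0 ?hnorm_ge0 // mulrC.
Qed.

Lemma hnormD x y : nm (x + y) <= nm x + nm y.
Proof.
rewrite -(@ler_pXn2r _ 2) ?nnegrE ?addr_ge0 ?hnorm_ge0 //.
have h : complex.Re (ip x y) <= nm x * nm y.
  apply: le_trans (cauchy_schwarz x y); apply: le_trans (cmod_Re _); exact: ler_norm.
rewrite hnorm_sqr ip_expand sqrrD mulr2n; lra.
Qed.

Lemma hnormDB x y z : nm (x - z) <= nm (x - y) + nm (y - z).
Proof. by have := hnormD (x - y) (y - z); rewrite addrA subrK. Qed.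

End Hilbert.

Section RealSeq.
Variable R : realType.

Definition rcvg0 (r : nat -> R) := forall eps : R, 0 < eps -> exists N : nat, forall n, (N <= n)%N -> r n < eps.

Lemma small_inv (eps : R) : 0 < eps -> exists N : nat, forall n, (N <= n)%N -> (n.+1%:R)^-1 < eps.
Proof.
move=> e0; exists (Num.bound (eps^-1)) => n hn.
rewrite -(invrK eps) ltf_pV2 ?posrE ?invr_gt0 ?ltr0Sn //.
apply: lt_le_trans (archi_boundP _) _; first by rewrite invr_ge0 ltW.
by rewrite ler_nat (leq_trans hn).
Qed.

Lemma rcvg0_inv : rcvg0 (fun n => (n.+1%:R)^-1).
Proof. exact: small_inv. Qed.

Lemma rcvg0_le (r s : nat -> R) : (forall n, r n <= s n) -> rcvg0 s -> rcvg0 r.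
Proof.
move=> h hs e e0; have [N hN] := hs e e0; exists N => n /hN; exact: le_lt_trans.
Qed.

Lemma rcvg0D (r s : nat -> R) : rcvg0 r -> rcvg0 s -> rcvg0 (fun n => r n + s n).
Proof.
move=> hr hs e e0.
have e2 : 0 < e / 2 by rewrite divr_gt0.
have [N1 h1] := hr _ e2; have [N2 h2] := hs _ e2.
exists (maxn N1 N2) => n hn.
have := h1 n (leq_trans (leq_maxl _ _) hn); have := h2 n (leq_trans (leq_maxr _ _) hn).
by move=> a b; rewrite [e](splitr e); apply: ltrD.
Qed.

Lemma rcvg0Z (K : R) (r : nat -> R) : 0 <= K -> rcvg0 r -> rcvg0 (fun n => K * r n).
Proof.
move=> K0 hr e e0.
have e1 : 0 < e / (K + 1) by rewrite divr_gt0 // ltr_pwDr.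
have [N h] := hr _ e1; exists N => n /h hn.
have Kp : 0 < K + 1 by rewrite ltr_pwDr.
case: (lerP 0 (r n)) => [rp|rn]; last first.
  by apply: le_lt_trans e0; rewrite mulr_ge0_le0 // ltW.
apply: le_lt_trans (_ : K * r n <= (K + 1) * r n) _.
  by rewrite ler_wpM2r // lerDl.
by rewrite mulrC -ltr_pdivlMr.
Qed.

Lemma rcvg0_sub (r : nat -> R) (phi : nat -> nat) :
  {homo phi : i j / (i < j)%N} -> rcvg0 r -> rcvg0 (fun k => r (phi k)).
Proof.
move=> hphi hr e e0; have [N h] := hr e e0; exists N => k hk; apply: h.
have ge : forall k, (k <= phi k)%N.
  elim=> [|j ih] //; apply: leq_ltn_trans ih (hphi _ _ _); exact: ltnSn.
exact: leq_trans hk (ge k).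
Qed.

Lemma rcvg0_shift (r : nat -> R) (M : nat) : rcvg0 r -> rcvg0 (fun n => r (n + M)%N).
Proof.
move=> hr e e0; have [N h] := hr e e0; exists N => n hn; apply: h.
exact: leq_trans hn (leq_addr _ _).
Qed.

Lemma le0_eps (x : R) : (forall e, 0 < e -> x <= e) -> x <= 0.
Proof.
move=> h; rewrite leNgt; apply/negP => x0.
have := h (x / 2); rewrite divr_gt0 // => /(_ isT) hx.
have : x <= x / 2 := hx. lra.
Qed.

Lemma rcvg0_cst_le (x : R) (r : nat -> R) : rcvg0 r -> (forall n, x <= r n) -> x <= 0.
Proof.
move=> hr h; apply: le0_eps => e e0; have [N hN] := hr e e0.
exact: le_trans (h N) (ltW (hN N (leqnn N))).
Qed.

End RealSeq.

Section HConv.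
Variable R : realType.
Local Notation C := (complex R).
Variable V : lmodType C.
Variable ip : V -> V -> C.
Hypothesis hH : is_hilbert ip.
Local Notation nm := (hnorm ip).

Lemma ncvgE u l : ncvg ip u l = rcvg0 (fun n => nm (u n - l)).
Proof. by []. Qed.
Lemma ccvgE (z : nat -> C) l : ccvg z l = rcvg0 (fun n => cmod (z n - l)).
Proof. by []. Qed.

Lemma rcvg0_0 : rcvg0 (fun _ : nat => (0 : R)).
Proof. by move=> e e0; exists 0%N. Qed.

Lemma ncvg_cst l : ncvg ip (fun _ => l) l.
Proof. by rewrite ncvgE; apply: rcvg0_le rcvg0_0 => n; rewrite subrr hnorm0 //. Qed.

Lemma ncvgD u v a b : ncvg ip u a -> ncvg ip v b -> ncvg ip (fun n => u n + v n) (a + b).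
Proof.
rewrite !ncvgE => hu hv; apply: rcvg0_le (rcvg0D hu hv) => n.
by rewrite opprD addrACA; apply: hnormD.
Qed.

Lemma ncvgZ c u a : ncvg ip u a -> ncvg ip (fun n => c *: u n) (c *: a).
Proof.
rewrite !ncvgE => hu; apply: rcvg0_le (rcvg0Z (cmod_ge0 c) hu) => n.
by rewrite -scalerBr hnormZ.
Qed.

Lemma ncvgN u a : ncvg ip u a -> ncvg ip (fun n => - u n) (- a).
Proof. by move=> /(ncvgZ (-1)); rewrite scaleN1r; under eq_fun do rewrite scaleN1r. Qed.

Lemma ncvgB u v a b : ncvg ip u a -> ncvg ip v b -> ncvg ip (fun n => u n - v n) (a - b).
Proof. by move=> hu /ncvgN; apply: ncvgD. Qed.

Lemma ncvg_sub u a phi : {homo phi : i j / (i < j)%N} -> ncvg ip u a ->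
  ncvg ip (fun k => u (phi k)) a.
Proof. by rewrite !ncvgE; apply: rcvg0_sub. Qed.

Lemma ncvg_unique u a b : ncvg ip u a -> ncvg ip u b -> a = b.
Proof.
move=> ha hb; have := ncvgB ha hb; under eq_fun do rewrite subrr.
move=> h0; have := ncvg_cst 0 => h1.
apply/eqP; rewrite -subr_eq0; apply/eqP; apply: (hnorm_eq0 hH).
apply/eqP; rewrite eq_le hnorm_ge0 andbT.
apply: (rcvg0_cst_le h0) => n; rewrite sub0r (hnormN hH).
by [].
Qed.

Lemma ccvg_ip_l u l v : ncvg ip u l -> ccvg (fun n => ip (u n) v) (ip l v).
Proof.
rewrite ncvgE ccvgE => h; apply: rcvg0_le (_ : rcvg0 (fun n => nm v * nm (u n - l))).
  by move=> n; rewrite -(ipBl hH) mulrC; apply: cauchy_schwarz.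
exact: rcvg0Z (hnorm_ge0 _ _) h.
Qed.

Definition ncauchy (u : nat -> V) := forall eps : R, 0 < eps -> exists N : nat,
  forall m n, (N <= m)%N -> (N <= n)%N -> nm (u m - u n) < eps.

Lemma complete u : ncauchy u -> exists l, ncvg ip u l.
Proof. by case: hH => _ _ _ _ h; apply: h. Qed.

Definition csub (M : V -> Prop) := [/\ M 0,
  (forall c x y, M x -> M y -> M (c *: x + y)) &
  (forall u l, (forall n, M (u n)) -> ncvg ip u l -> M l)].

Lemma parallelogram x y :
  nm (x + y) ^+ 2 + nm (x - y) ^+ 2 = 2 * nm x ^+ 2 + 2 * nm y ^+ 2.
Proof.
have h1 := ip_expand hH x y; have h2 := ip_expand hH x (- y).
rewrite (ipNr hH) (hnormN hH) ReN in h2.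
rewrite (hnorm_sqr hH (x + y)) (hnorm_sqr hH (x - y)) h1 h2; lra.
Qed.

End HConv.

Section Proj.
Variable R : realType.
Local Notation C := (complex R).
Variable V : lmodType C.
Variable ip : V -> V -> C.
Hypothesis hH : is_hilbert ip.
Local Notation nm := (hnorm ip).

Lemma min_orth M y p : csub ip M -> M p -> (forall q, M q -> nm (y - p) <= nm (y - q)) ->
  forall q, M q -> ip (y - p) q = 0.
Proof.
move=> [M0 Mlin Mcl] Mp hmin q Mq.
set w := y - p; set z := ip w q.
have key : forall s : R, 0 < s -> 2 * cmod z ^+ 2 <= s * (cmod z ^+ 2 * nm q ^+ 2).
  move=> s s0.
  set t : C := (s%:C)%C * z.
  have Mpt : M (p + t *: q) by rewrite addrC; apply: Mlin.
  have := hmin _ Mpt.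
  have -> : y - (p + t *: q) = w + - (t *: q) by rewrite /w opprD addrA.
  move=> h.
  have h2 : nm w ^+ 2 <= nm (w + - (t *: q)) ^+ 2.
    by rewrite ler_pXn2r ?nnegrE ?hnorm_ge0.
  rewrite [X in _ <= X](hnorm_sqr hH) (ip_expand hH) (hnormN hH) (hnormZ hH) (ipNr hH) (ipZr hH) in h2.
  have ct : cmod t = s * cmod z by rewrite cmodM cmodR ger0_norm // ltW.
  have rt : complex.Re (- (conjc t * z)) = - (s * cmod z ^+ 2).
    rewrite ReN /t conjcM conjcR -mulrA [conjc z * z]mulrC -cmod_sqr.
    by rewrite -rmorphM.
  rewrite ct rt exprMn exprMn in h2.
  have : s * (2 * cmod z ^+ 2) <= s * (s * (cmod z ^+ 2 * nm q ^+ 2)) by nra.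
  by rewrite ler_pM2l.
have q0 : 0 <= nm q ^+ 2 by rewrite sqr_ge0.
have s0 : 0 < (nm q ^+ 2 + 1)^-1 by rewrite invr_gt0 ltr_pwDr.
have := key _ s0.
have hs : (nm q ^+ 2 + 1)^-1 * nm q ^+ 2 <= 1.
  by rewrite mulrC ler_pdivrMr ?ltr_pwDr // mul1r lerDl.
have cz0 : 0 <= cmod z ^+ 2 by rewrite sqr_ge0.
move=> h3.
have : cmod z ^+ 2 <= 0.
  have : (nm q ^+ 2 + 1)^-1 * (cmod z ^+ 2 * nm q ^+ 2) <= cmod z ^+ 2.
    rewrite mulrA [_ * cmod z ^+ 2]mulrC -mulrA. 
    by rewrite ler_piMr.
  lra.
move=> h4; apply: cmod_eq0.
have h5 : cmod z ^+ 2 == 0 by rewrite eq_le h4 sqr_ge0.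
by move: h5; rewrite expf_eq0 /= => /eqP.
Qed.

Lemma proj_ex M y : csub ip M -> exists p, M p /\ forall q, M q -> ip (y - p) q = 0.
Proof.
move=> hM; have [M0 Mlin Mcl] := hM.
have Madd : forall a b, M a -> M b -> M (a + b).
  by move=> a b Ma Mb; rewrite -[a]scale1r; apply: Mlin.
have Mscal : forall (c : C) a, M a -> M (c *: a).
  by move=> c a Ma; rewrite -[c *: a]addr0; apply: Mlin.
pose E : set R := fun r => exists m, M m /\ r = nm (y - m).
have hE : has_inf E.
  split; first by exists (nm (y - 0)); exists 0; split.
  by exists 0 => r [m [_ ->]]; apply: hnorm_ge0.
set d := inf E.
have dlb : forall m, M m -> d <= nm (y - m).
  by move=> m Mm; apply: (ge_inf hE.2); exists m; split.
have d0 : 0 <= d.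
  by apply: lb_le_inf; [exact: hE.1 | move=> r [m [_ ->]]; apply: hnorm_ge0].
have : forall n : nat, exists m, M m /\ nm (y - m) < d + (n.+1%:R)^-1.
  move=> n; have en : 0 < (n.+1%:R : R)^-1 by rewrite invr_gt0.
  have [r [m [Mm ->]] hr] := inf_adherent en hE.
  by exists m.
move=> /choice [m hm]; clearbody d.
have cau : ncauchy ip m.
  move=> eps e0.
  have del0 : 0 < eps ^+ 2 / (8 * d + 4) by rewrite divr_gt0 ?exprn_gt0 //; lra.
  have [N hN] := small_inv del0.
  exists N => a b ha hb.
  have ea := hN a ha; have eb := hN b hb.
  have ea0 : 0 < (a.+1%:R : R)^-1 by rewrite invr_gt0.
  have eb0 : 0 < (b.+1%:R : R)^-1 by rewrite invr_gt0.
  have ea1 : (a.+1%:R : R)^-1 <= 1 by rewrite invf_le1 // (ler_nat _ 1).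
  have eb1 : (b.+1%:R : R)^-1 <= 1 by rewrite invf_le1 // (ler_nat _ 1).
  have par := parallelogram hH (y - m a) (y - m b).
  have e1 : (y - m a) - (y - m b) = m b - m a.
    by rewrite opprB addrC addrA subrK.
  rewrite e1 in par.
  set mid := (2%:R^-1 : C) *: (m a + m b).
  have Mmid : M mid by apply: Mscal; apply: Madd; [exact: (hm a).1 | exact: (hm b).1].
  have e2 : (y - m a) + (y - m b) = (2%:R : C) *: (y - mid).
    rewrite scalerBr /mid scalerA mulfV ?pnatr_eq0 // scale1r scaler_nat mulr2n.
    by rewrite opprD !addrA; congr (_ - _); rewrite -!addrA; congr (_ + _); rewrite addrC.
  rewrite e2 (hnormZ hH) in par.
  have c2 : cmod (2%:R : C) = 2.
    by rewrite -(rmorph_nat (real_complex R)) cmodR ger0_norm.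
  rewrite c2 (hnormB hH (m b)) in par.
  have hmid := dlb _ Mmid.
  have ha2 := (hm a).2; have hb2 := (hm b).2.
  set ia := (a.+1%:R : R)^-1 in ea ea0 ea1 ha2 *.
  set ib := (b.+1%:R : R)^-1 in eb eb0 eb1 hb2 *.
  have n1 := hnorm_ge0 ip (y - m a); have n2 := hnorm_ge0 ip (y - m b).
  have sqa : nm (y - m a) ^+ 2 <= (d + ia) ^+ 2.
    by rewrite ler_pXn2r ?nnegrE //; lra.
  have sqb : nm (y - m b) ^+ 2 <= (d + ib) ^+ 2.
    by rewrite ler_pXn2r ?nnegrE //; lra.
  have sqm : (2 * d) ^+ 2 <= (2 * nm (y - mid)) ^+ 2.
    by rewrite ler_pXn2r ?nnegrE //; lra.
  have fin : nm (m a - m b) ^+ 2 < eps ^+ 2.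
    have : (8 * d + 4) * (eps ^+ 2 / (8 * d + 4)) = eps ^+ 2.
      by rewrite mulrC divfK //; apply/eqP => h; lra.
    nra.
  by move: fin; rewrite ltr_pXn2r ?nnegrE ?hnorm_ge0 ?ltW.
have [p hp] := complete hH cau.
have Mp : M p := Mcl _ _ (fun n => (hm n).1) hp.
exists p; split => //.
apply: (min_orth hM) => // q Mq.
apply: le_trans (dlb _ Mq).
rewrite -subr_le0; apply: (rcvg0_cst_le (r := fun n => (n.+1%:R)^-1 + nm (m n - p))).
  by apply: rcvg0D; [exact: rcvg0_inv | exact: hp].
move=> n; have := hnormDB hH y (m n) p; have := (hm n).2.
set i := (n.+1%:R : R)^-1; lra.
Qed.

End Proj.

Section Riesz.
Variable R : realType.
Local Notation C := (complex R).
Variable V : lmodType C.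
Variable ip : V -> V -> C.
Hypothesis hH : is_hilbert ip.
Local Notation nm := (hnorm ip).

Lemma riesz (L : V -> C) :
  (forall c x y, L (c *: x + y) = conjc c * L x + L y) ->
  (exists K, forall x, cmod (L x) <= K * nm x) ->
  exists g, forall y, L y = ip g y.
Proof.
move=> Llin [K LK].
have L0 : L 0 = 0.
  have := Llin 1 0 0; rewrite scaler0 addr0 => h.
  rewrite conjc1' mul1r in h. by apply: (addrI (L 0)); rewrite addr0 -h.
have LD : forall x y, L (x + y) = L x + L y.
  by move=> x y; rewrite -[x]scale1r Llin conjc1' mul1r scale1r.
have LZ : forall c x, L (c *: x) = conjc c * L x.
  by move=> c x; rewrite -[c *: x]addr0 Llin L0 addr0.
have LB : forall x y, L (x - y) = L x - L y.
  by move=> x y; rewrite LD -scaleN1r LZ conjcN conjc1' mulN1r.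
have hK : csub ip (fun y => L y = 0).
  split => //.
    by move=> c x y /= hx hy; rewrite Llin hx hy mulr0 addr0.
  move=> u l /= hu hl; apply: cmod_eq0; apply/eqP; rewrite eq_le cmod_ge0 andbT.
  apply: (rcvg0_cst_le (r := fun n => `|K| * nm (u n - l))).
    by apply: rcvg0Z => //; exact: hl.
  move=> n; rewrite -(hnormN hH) opprB.
  have : cmod (L (l - u n)) = cmod (L l) by rewrite LB hu subr0.
  move=> <-; apply: le_trans (LK _) _; apply: ler_wpM2r; [exact: hnorm_ge0 | exact: ler_norm].
have [Lz|] := pselect (forall y, L y = 0).
  by exists 0 => y; rewrite Lz (ip0l hH).
move=> /existsNP [y0 Ly0].
have [p [Kp hp]] := proj_ex hH y0 hK.
set z := y0 - p.
have Lz : L z <> 0 by rewrite /z LB Kp subr0.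
have z0 : nm z ^+ 2 != 0.
  rewrite expf_eq0 /=; apply/eqP => /(hnorm_eq0 hH) h; apply: Lz; by rewrite h L0.
have z0C : ((nm z ^+ 2)%:C)%C != 0 :> C by rewrite eq_complex /= negb_and z0.
exists ((L z / ((nm z ^+ 2)%:C)%C) *: z) => y.
set k := conjc (L y) *: z - conjc (L z) *: y.
have Kk : L k = 0.
  by rewrite /k LB !LZ !conjcK' mulrC subrr.
have := hp _ Kk; rewrite -/z /k (ipBr hH) !(ipZr hH) !conjcK' (ip_self hH z) => h.
rewrite (ipZl hH).
apply: (mulfI z0C); rewrite mulrA mulrCA divff // mulr1 -[LHS]mulrC.
by apply/eqP; rewrite -subr_eq0 h.
Qed.

End Riesz.

Definition incr (s : nat -> nat) := {homo s : i j / (i < j)%N}.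

Lemma incr_succ s : (forall k, (s k < s k.+1)%N) -> incr s.
Proof.
move=> hs i j; elim: j => // j IH; rewrite ltnS leq_eqVlt => /orP [/eqP -> | /IH h].
  exact: hs.
exact: ltn_trans h (hs j).
Qed.

Lemma incr_ge s : incr s -> forall k, (k <= s k)%N.
Proof.
move=> hs; elim=> [|k ih] //; apply: leq_ltn_trans ih (hs _ _ _); exact: ltnSn.
Qed.

Lemma incr_id : incr id.
Proof. by []. Qed.

Lemma incr_comp s t : incr s -> incr t -> incr (fun k => s (t k)).
Proof. by move=> hs ht i j ij; apply: hs; apply: ht. Qed.

Lemma diag (P : nat -> (nat -> nat) -> Prop) :
  (forall j s t, incr t -> P j s -> P j (fun k => s (t k))) ->
  (forall j s m, P j (fun k => s (k + m)%N) -> P j s) ->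
  (forall j s, incr s -> exists t, incr t /\ P j (fun k => s (t k))) ->
  exists phi, incr phi /\ forall j, P j phi.
Proof.
move=> Psub Pshift Pext.
have : forall js : nat * (nat -> nat), exists t, incr t /\
    (incr js.2 -> P js.1 (fun k => js.2 (t k))).
  move=> [j s]; case: (pselect (incr s)) => hs.
    by have [t [ti tp]] := Pext j s hs; exists t.
  by exists id; split => //; exact: incr_id.
move=> /choice [E hE].
pose Psi := fix Psi (j : nat) : nat -> nat := match j with
  | 0 => E (0%N, id)
  | j'.+1 => fun k => Psi j' (E (j'.+1, Psi j') k) end.
have Psi_incr : forall j, incr (Psi j).
  elim=> [|j ih]; first exact: (hE (0%N, id)).1.
  by apply: incr_comp ih (hE (j.+1, Psi j)).1.
have Psi_P : forall j, P j (Psi j).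
  case=> [|j]; first exact: ((hE (0%N, id)).2 incr_id).
  exact: ((hE (j.+1, Psi j)).2 (Psi_incr j)).
pose T (j : nat) := fix T (d : nat) : nat -> nat := match d with
  | 0 => id
  | d'.+1 => fun k => T d' (E ((j + d').+1, Psi (j + d')) k) end.
have T_incr : forall j d, incr (T j d).
  move=> j; elim=> [|d ih]; first exact: incr_id.
  by apply: incr_comp ih (hE _).1.
have PsiT : forall j d k, Psi (j + d)%N k = Psi j (T j d k).
  move=> j; elim=> [|d ih] k; first by rewrite addn0.
  by rewrite addnS /= ih.
exists (fun k => Psi k k); split.
  apply: incr_succ => k /=.
  apply: Psi_incr; apply: leq_trans (incr_ge (hE (k.+1, Psi k)).1 k.+1).
  exact: ltnSn.
move=> j; apply: (Pshift j _ j).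
have -> : (fun k => Psi (k + j)%N (k + j)%N) = (fun k => Psi j (T j k (k + j)%N)).
  by apply: funext => k; rewrite addnC PsiT addnC.
apply: Psub; last exact: Psi_P.
apply: incr_succ => k /=.
apply: T_incr; apply: leq_trans (incr_ge (hE _).1 _).
by rewrite addSn ltnS.
Qed.

From mathcomp Require Import topology normedtype sequences.
Import numFieldNormedType.Exports.

Section BW.
Variable R : realType.
Local Notation C := (complex R).

Lemma rBW (u : nat -> R) (K : R) : (forall n, `|u n| <= K) ->
  exists phi : nat -> nat, {homo phi : i j / (i < j)%N} /\
    exists l, rcvg0 (fun n => `|u (phi n) - l|).
Proof.
move=> hK.
have bu : bounded_fun u.
  exists K; split; first exact: num_real.
  by move=> x Kx y _; apply: le_trans (hK y) (ltW Kx).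
have [f finc fcvg] := bolzano_weierstrass bu.
exists f; split.
  move=> i j ij; rewrite ltnNge; apply/negP => h.
  have e := finc j i; move: ij; rewrite ltnNge -e => /negP; apply; exact: h.
exists (limn (u \o f)) => e e0.
move: fcvg => /cvgrPdist_lt /(_ e e0).
case=> N _ hN; exists N => n hn; rewrite distrC; exact: hN.
Qed.

Lemma cBW (z : nat -> C) (K : R) : (forall n, cmod (z n) <= K) ->
  exists phi : nat -> nat, {homo phi : i j / (i < j)%N} /\
    exists l, rcvg0 (fun n => cmod (z (phi n) - l)).
Proof.
move=> hK.
have [f1 [f1i [lr hr]]] := @rBW (fun n => complex.Re (z n)) K
  (fun n => le_trans (cmod_Re _) (hK n)).
have [f2 [f2i [li hi]]] := @rBW (fun n => complex.Im (z (f1 n))) K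
  (fun n => le_trans (cmod_Im _) (hK _)).
exists (fun n => f1 (f2 n)); split.
  by move=> i j ij; apply: f1i; apply: f2i.
exists (Complex lr li).
apply: rcvg0_le (rcvg0D (rcvg0_sub f2i hr) hi) => n /=.
by apply: le_trans (cmod_le_ReIm _) _; case: (z (f1 (f2 n))) => a b.
Qed.

End BW.

Section Cseq.
Variable R : realType.
Local Notation C := (complex R).

Lemma rcvg0_unshift (r : nat -> R) m : rcvg0 (fun n => r (n + m)%N) -> rcvg0 r.
Proof.
move=> h e e0; have [N hN] := h e e0; exists (N + m)%N => n hn.
have -> : n = ((n - m) + m)%N by rewrite subnK // (leq_trans (leq_addl _ _) hn).
by apply: hN; rewrite leq_subRL ?(leq_trans (leq_addl _ _) hn) // addnC.
Qed.

Lemma ccvg_sub (z : nat -> C) l phi : incr phi -> ccvg z l -> ccvg (fun k => z (phi k)) l.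
Proof. by rewrite !ccvgE; apply: rcvg0_sub. Qed.

Lemma ccvg_unshift (z : nat -> C) l m : ccvg (fun k => z (k + m)%N) l -> ccvg z l.
Proof. by rewrite !ccvgE; apply: rcvg0_unshift. Qed.

Lemma ccvg_cst (l : C) : ccvg (fun _ => l) l.
Proof. by rewrite ccvgE => e e0; exists 0%N => n _; rewrite subrr cmod0. Qed.

Lemma ccvgD (z w : nat -> C) a b : ccvg z a -> ccvg w b -> ccvg (fun n => z n + w n) (a + b).
Proof.
rewrite !ccvgE => hz hw; apply: rcvg0_le (rcvg0D hz hw) => n.
by rewrite opprD addrACA; apply: cmodD.
Qed.

Lemma ccvgM (c : C) (z : nat -> C) a : ccvg z a -> ccvg (fun n => c * z n) (c * a).
Proof.
rewrite !ccvgE => hz; apply: rcvg0_le (rcvg0Z (cmod_ge0 c) hz) => n.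
by rewrite -mulrBr cmodM.
Qed.

Lemma ccvg_eq (z w : nat -> C) a : (forall n, z n = w n) -> ccvg z a -> ccvg w a.
Proof. by move=> e; rewrite !ccvgE; apply: rcvg0_le => n; rewrite e. Qed.

Lemma ccvg_unique (z : nat -> C) a b : ccvg z a -> ccvg z b -> a = b.
Proof.
rewrite !ccvgE => ha hb; apply/eqP; rewrite -subr_eq0; apply/eqP.
apply: cmod_eq0; apply/eqP; rewrite eq_le cmod_ge0 andbT.
apply: (rcvg0_cst_le (rcvg0D ha hb)) => n.
have := cmodD (a - z n) (z n - b); rewrite addrA subrK cmodB; lra.
Qed.

Lemma ccvg_le (z : nat -> C) a (K : R) : ccvg z a -> (forall n, cmod (z n) <= K) -> cmod a <= K.
Proof.
rewrite ccvgE => ha hK; rewrite -subr_le0; apply: (rcvg0_cst_le ha) => n.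
have := cmodD (a - z n) (z n); rewrite subrK cmodB => h.
by have := hK n; lra.
Qed.

Lemma ccauchy_cvg (z : nat -> C) :
  (forall e : R, 0 < e -> exists N : nat, forall a b, (N <= a)%N -> (N <= b)%N -> cmod (z a - z b) < e) ->
  (exists K, forall n, cmod (z n) <= K) -> exists l, ccvg z l.
Proof.
move=> hc [K hK]; have [phi [phii [l hl]]] := cBW hK.
exists l => e e0.
have e2 : 0 < e / 2 by rewrite divr_gt0.
have [N1 h1] := hc _ e2; have [N2 h2] := hl _ e2.
exists N1 => n hn.
set k := maxn N1 N2.
have hk1 : (N1 <= phi k)%N := leq_trans (leq_maxl _ _) (incr_ge phii k).
have hk2 : (N2 <= k)%N := leq_maxr _ _.
have a1 := h1 n (phi k) hn hk1; have a2 := h2 k hk2.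
have := cmodD (z n - z (phi k)) (z (phi k) - l); rewrite addrA subrK.
lra.
Qed.

End Cseq.

Section Weak.
Variable R : realType.
Local Notation C := (complex R).
Variable V : lmodType C.
Variable ip : V -> V -> C.
Hypothesis hH : is_hilbert ip.
Local Notation nm := (hnorm ip).

Inductive spanP (v : nat -> V) : V -> Prop :=
  | spanP0 : spanP v 0
  | spanPS j c y : spanP v y -> spanP v (c *: v j + y).

Lemma spanP_lin v c x y : spanP v x -> spanP v y -> spanP v (c *: x + y).
Proof.
move=> hx hy; elim: hx => [|j d x' _ ih]; first by rewrite scaler0 add0r.
rewrite scalerDr scalerA -addrA; exact: spanPS.
Qed.

Lemma spanP_gen v j : spanP v (v j).
Proof. by rewrite -[v j]addr0 -[v j]scale1r; apply: spanPS; apply: spanP0. Qed.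

Lemma weak_compact (v : nat -> V) (K : R) : (forall n, nm (v n) <= K) ->
  exists phi g, incr phi /\ wcvg ip (fun k => v (phi k)) g.
Proof.
move=> hK.
have K0 : 0 <= K := le_trans (hnorm_ge0 ip (v 0%N)) (hK 0%N).
have ipK : forall n y, cmod (ip (v n) y) <= K * nm y.
  move=> n y; apply: le_trans (cauchy_schwarz hH _ _) _.
  by apply: ler_wpM2r; [exact: hnorm_ge0 | exact: hK].
pose P j s := exists l, ccvg (fun k => ip (v (s k)) (v j)) l.
have [phi [phii hphi]] : exists phi, incr phi /\ forall j, P j phi.
  apply: diag.
  - by move=> j s t ti [l hl]; exists l; apply: (ccvg_sub (z := fun k => ip (v (s k)) (v j))).
  - by move=> j s m [l hl]; exists l; apply: ccvg_unshift hl.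
  - move=> j s si.
    have [t [ti [l hl]]] := @cBW _ (fun k => ip (v (s k)) (v j)) (K * K)
      (fun k => le_trans (ipK _ _) (ler_wpM2l K0 (hK j))).
    by exists t; split => //; exists l.
exists phi.
set w := fun k => v (phi k).
have wK : forall k y, cmod (ip (w k) y) <= K * nm y by move=> k y; exact: ipK.
have conv_sp : forall y, spanP v y -> exists l, ccvg (fun k => ip (w k) y) l.
  move=> y; elim=> [|j c y' _ [l hl]].
    by exists 0; apply: ccvg_eq (ccvg_cst 0) => n; rewrite (ip0r hH).
  have [lj hj] := hphi j.
  exists (conjc c * lj + l); apply: ccvg_eq (ccvgD (ccvgM (conjc c) hj) hl) => n.
  by rewrite (ipDr hH) (ipZr hH).
pose M y := forall e : R, 0 < e -> exists s, spanP v s /\ nm (y - s) < e.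
have hM : csub ip M.
  split.
  - by move=> e e0; exists 0; split; [exact: spanP0 | rewrite subr0 (hnorm0 hH)].
  - move=> c x y hx hy e e0.
    have e1 : 0 < e / 2 / (cmod c + 1) by rewrite !divr_gt0 // ltr_pwDr // cmod_ge0.
    have e2 : 0 < e / 2 by rewrite divr_gt0.
    have [sx [spx hsx]] := hx _ e1; have [sy [spy hsy]] := hy _ e2.
    exists (c *: sx + sy); split; first exact: spanP_lin.
    have -> : c *: x + y - (c *: sx + sy) = c *: (x - sx) + (y - sy).
      by rewrite scalerBr opprD addrACA.
    apply: le_lt_trans (hnormD hH _ _) _; rewrite (hnormZ hH).
    have cp : 0 <= cmod c := cmod_ge0 c.
    have : cmod c * nm (x - sx) <= (cmod c + 1) * nm (x - sx).
      by apply: ler_wpM2r; [exact: hnorm_ge0 | lra].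
    have : (cmod c + 1) * nm (x - sx) < e / 2.
      by rewrite mulrC -ltr_pdivlMr // ltr_pwDr.
    lra.
  - move=> u l hu hl e e0.
    have e2 : 0 < e / 2 by rewrite divr_gt0.
    have [N hN] := hl _ e2.
    have [s [sps hs]] := hu N _ e2.
    exists s; split => //.
    have := hnormDB hH l (u N) s; rewrite (hnormB hH l (u N)) => h.
    have := hN N (leqnn N); lra.
have wM : forall k, M (w k).
  by move=> k e e0; exists (w k); split; [exact: spanP_gen | rewrite subrr (hnorm0 hH)].
have conv_M : forall y, M y -> exists l, ccvg (fun k => ip (w k) y) l.
  move=> y hy; apply: ccauchy_cvg; last by exists (K * nm y).
  move=> e e0.
  have d0 : 0 < e / 3 / (K + 1) by rewrite !divr_gt0 // ltr_pwDr.
  have [s [sps hs]] := hy _ d0.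
  have [l hl] := conv_sp _ sps.
  have e3 : 0 < e / 6 by rewrite divr_gt0.
  have [N hN] := hl _ e3.
  exists N => a b ha hb.
  have Kd : K * nm (y - s) <= e / 3.
    have : K * nm (y - s) <= (K + 1) * nm (y - s).
      by apply: ler_wpM2r; [exact: hnorm_ge0 | lra].
    have : (K + 1) * nm (y - s) < e / 3.
      by rewrite mulrC -ltr_pdivlMr // ltr_pwDr.
    lra.
  have t1 := wK a (y - s); have t2 := wK b (y - s).
  have t3 := hN a ha; have t4 := hN b hb.
  have dec : ip (w a) y - ip (w b) y =
     ip (w a) (y - s) + ((ip (w a) s - l) - (ip (w b) s - l)) - ip (w b) (y - s).
    by rewrite !(ipBr hH); ring.
  rewrite dec.
  have c1 := cmodD (ip (w a) (y - s) + ((ip (w a) s - l) - (ip (w b) s - l))) (- ip (w b) (y - s)).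
  have c2 := cmodD (ip (w a) (y - s)) ((ip (w a) s - l) - (ip (w b) s - l)).
  have c3 := cmodD (ip (w a) s - l) (- (ip (w b) s - l)).
  rewrite cmodN in c1; rewrite cmodN in c3.
  lra.
have conv_all : forall y, exists l, ccvg (fun k => ip (w k) y) l.
  move=> y; have [p [Mp hp]] := proj_ex hH y hM.
  have [l hl] := conv_M _ Mp.
  exists l; apply: ccvg_eq hl => k.
  have : ip (w k) (y - p) = 0 by rewrite (ip_sym hH) hp // conjc0.
  by rewrite (ipBr hH) => /eqP; rewrite subr_eq0 => /eqP ->.
have /choice [L hL] := conv_all.
have Llin : forall c x y, L (c *: x + y) = conjc c * L x + L y.
  move=> c x y; apply: (ccvg_unique (hL (c *: x + y))).
  apply: ccvg_eq (ccvgD (ccvgM (conjc c) (hL x)) (hL y)) => n.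
  by rewrite (ipDr hH) (ipZr hH).
have Lbd : exists K', forall x, cmod (L x) <= K' * nm x.
  by exists K => x; apply: ccvg_le (hL x) _ => n; exact: wK.
have [g hg] := riesz hH Llin Lbd.
exists g; split => // y; rewrite -hg; exact: hL.
Qed.

End Weak.

Section LinOp.
Variable R : realType.
Local Notation C := (complex R).
Variables V W : lmodType C.
Variable dA : V -> Prop.
Variable A : V -> W.
Hypothesis hA : lin_op dA A.

Lemma lo_dom0 : dA 0. Proof. by case: hA. Qed.
Lemma lo_dom c x y : dA x -> dA y -> dA (c *: x + y).
Proof. by case: hA => _ h hx hy; case: (h c x y hx hy). Qed.
Lemma lo_lin c x y : dA x -> dA y -> A (c *: x + y) = c *: A x + A y.
Proof. by case: hA => _ h hx hy; case: (h c x y hx hy). Qed.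
Lemma lo_0 : A 0 = 0.
Proof.
have := lo_lin 1 lo_dom0 lo_dom0; rewrite scaler0 addr0 scale1r => h.
by apply: (addrI (A 0)); rewrite addr0 -h.
Qed.
Lemma lo_domD x y : dA x -> dA y -> dA (x + y).
Proof. by move=> hx hy; rewrite -[x]scale1r; apply: lo_dom. Qed.
Lemma lo_domZ c x : dA x -> dA (c *: x).
Proof. by move=> hx; rewrite -[c *: x]addr0; apply: lo_dom => //; exact: lo_dom0. Qed.
Lemma lo_domB x y : dA x -> dA y -> dA (x - y).
Proof. by move=> hx hy; rewrite addrC -scaleN1r; apply: lo_dom. Qed.
Lemma lo_D x y : dA x -> dA y -> A (x + y) = A x + A y.
Proof. by move=> hx hy; have := lo_lin 1 hx hy; rewrite !scale1r. Qed.
Lemma lo_Z c x : dA x -> A (c *: x) = c *: A x.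
Proof. by move=> hx; rewrite -[c *: x]addr0 lo_lin ?lo_0 ?addr0 //; exact: lo_dom0. Qed.
Lemma lo_B x y : dA x -> dA y -> A (x - y) = A x - A y.
Proof.
move=> hx hy; rewrite addrC -scaleN1r lo_lin // scaleN1r addrC //.
Qed.

End LinOp.

Section GOp.
Variable R : realType.
Local Notation C := (complex R).
Variables H0 H1 : lmodType C.
Variable ip0 : H0 -> H0 -> C.
Variable ip1 : H1 -> H1 -> C.
Hypothesis hH0 : is_hilbert ip0.
Hypothesis hH1 : is_hilbert ip1.
Variable dG : H0 -> Prop.
Variable G : H0 -> H1.
Hypothesis hG : densely_defined_closed ip0 ip1 dG G.
Hypothesis hcomp : compact_embedding ip0 ip1 dG G.
Local Notation nm0 := (hnorm ip0).
Local Notation nm1 := (hnorm ip1).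

Lemma hGlin : lin_op dG G. Proof. by case: hG. Qed.
Lemma hGcl : closed_op ip0 ip1 dG G. Proof. by case: hG. Qed.

Definition kerG x := dG x /\ G x = 0.
Definition perpK x := forall k, kerG k -> ip0 x k = 0.

Lemma kerG_csub : csub ip0 kerG.
Proof.
split.
- by split; [exact: (lo_dom0 hGlin) | exact: (lo_0 hGlin)].
- move=> c x y [dx Gx] [dy Gy]; split; first exact: (lo_dom hGlin).
  by rewrite (lo_lin hGlin) // Gx Gy scaler0 addr0.
- move=> u l hu hl.
  have h0 : ncvg ip1 (fun n => G (u n)) 0.
    by rewrite ncvgE => e e0; exists 0%N => n _; rewrite (hu n).2 subrr (hnorm0 hH1).
  by have := hGcl (fun n => (hu n).1) hl h0.
Qed.

Lemma graph_norm x : hnorm (graph_ip ip0 ip1 G) x = Num.sqrt (nm0 x ^+ 2 + nm1 (G x) ^+ 2).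
Proof. by rewrite {1}/hnorm /graph_ip ReD -(hnorm_sqr hH0) -(hnorm_sqr hH1). Qed.

Lemma poincare : exists Cp : R, 0 <= Cp /\
  forall w, dG w -> perpK w -> nm0 w <= Cp * nm1 (G w).
Proof.
case: (pselect (exists Cp : R, 0 <= Cp /\ forall w, dG w -> perpK w -> nm0 w <= Cp * nm1 (G w))) => // hno.
have : forall n : nat, exists w, dG w /\ perpK w /\ n.+1%:R * nm1 (G w) < nm0 w.
  move=> n; apply: contrapT => hn; apply: hno; exists n.+1%:R; split => // w dw pw.
  rewrite leNgt; apply/negP => lt; apply: hn; exists w; split => //.
move=> /choice [w hw].
have wpos : forall n, 0 < nm0 (w n).
  move=> n; have [_ [_ h]] := hw n; apply: le_lt_trans h.
  by apply: mulr_ge0 => //; exact: hnorm_ge0.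
pose x n := ((nm0 (w n))^-1%:C)%C *: w n.
have dx : forall n, dG (x n) by move=> n; apply: (lo_domZ hGlin); case: (hw n).
have nx : forall n, nm0 (x n) = 1.
  move=> n; rewrite (hnormZ hH0) cmodR ger0_norm ?invr_ge0 ?ltW // mulVf //.
  by apply/eqP => h; have := wpos n; rewrite h ltxx.
have Gx : forall n, nm1 (G (x n)) < (n.+1%:R)^-1.
  move=> n; have dw := (hw n).1.
  rewrite /x (lo_Z hGlin) // (hnormZ hH1) cmodR ger0_norm ?invr_ge0 ?ltW //.
  have [_ [_ h]] := hw n.
  by rewrite ltr_pdivrMl ?wpos // ltr_pdivlMr ?ltr0Sn // mulrC.
have px : forall n, perpK (x n).
  by move=> n k hk; rewrite (ipZl hH0) (hw n).2.1 // mulr0.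
have [phi [l [phii hl]]] : exists (phi : nat -> nat) (l : H0), {homo phi : i j / (i < j)%N} /\
      ncvg ip0 (fun k => x (phi k)) l.
  apply: hcomp => //; exists 2 => n; rewrite graph_norm nx expr1n.
  have g1 : nm1 (G (x n)) <= 1.
    apply: ltW; apply: lt_le_trans (Gx n) _; by rewrite invf_le1 ?ltr0Sn // (ler_nat _ 1).
  have : nm1 (G (x n)) ^+ 2 <= 1 by rewrite expr2 -[1](mulr1 1); apply: ler_pM => //; exact: hnorm_ge0.
  move=> h2; rewrite -(@ler_pXn2r _ 2) ?nnegrE ?sqrtr_ge0 // sqr_sqrtr; last first.
    by rewrite addr_ge0 // sqr_ge0.
  lra.
have Gcv : ncvg ip1 (fun k => G (x (phi k))) 0.
  rewrite ncvgE; apply: rcvg0_le (rcvg0_sub phii (@rcvg0_inv R)) => k.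
  by rewrite subr0; apply: ltW; exact: Gx.
have [dl Gl] := hGcl (fun k => dx (phi k)) hl Gcv.
have l0 : l = 0.
  apply: (ip_def hH0).
  have c1 := ccvg_ip_l hH0 l hl.
  apply: (ccvg_unique c1); apply: ccvg_eq (ccvg_cst 0) => k.
  by rewrite px.
move: hl; rewrite l0 ncvgE => /(_ (1/2)); rewrite divr_gt0 // => /(_ isT) [N hN].
have := hN N (leqnn N); rewrite subr0 nx; lra.
Qed.

End GOp.

Section GOp2.
Variable R : realType.
Local Notation C := (complex R).
Variables H0 H1 : lmodType C.
Variable ip0 : H0 -> H0 -> C.
Variable ip1 : H1 -> H1 -> C.
Hypothesis hH0 : is_hilbert ip0.
Hypothesis hH1 : is_hilbert ip1.
Variable dG : H0 -> Prop.
Variable G : H0 -> H1.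
Hypothesis hG : densely_defined_closed ip0 ip1 dG G.
Hypothesis hcomp : compact_embedding ip0 ip1 dG G.
Local Notation nm0 := (hnorm ip0).
Local Notation nm1 := (hnorm ip1).
Local Notation hGl := (hGlin hG).
Local Notation rn := (ran dG G).

Lemma B_ex y : rn y -> exists x, dG x /\ perpK ip0 dG G x /\ G x = y.
Proof.
move=> [x0 [dx0 Gx0]]; have [p [[dp Gp] hp]] := proj_ex hH0 x0 (kerG_csub hH1 hG).
exists (x0 - p); split; first exact: (lo_domB hGl).
split; first by move=> k hk; exact: hp.
by rewrite (lo_B hGl) // Gp subr0.
Qed.

Lemma B_unique x x' : dG x -> dG x' -> perpK ip0 dG G x -> perpK ip0 dG G x' ->
  G x = G x' -> x = x'.
Proof.
move=> dx dx' px px' e; apply/eqP; rewrite -subr_eq0; apply/eqP.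
have kd : kerG dG G (x - x').
  by split; [exact: (lo_domB hGl) | rewrite (lo_B hGl) // e subrr].
apply: (ip_def hH0); by rewrite (ipBl hH0) (px _ kd) (px' _ kd) subrr.
Qed.

Lemma ran_csub : csub ip1 rn.
Proof.
have [Cp [Cp0 hCp]] := poincare hH0 hH1 hG hcomp.
split.
- by exists 0; split; [exact: (lo_dom0 hGl) | exact: (lo_0 hGl)].
- move=> c _ _ [x [dx <-]] [y [dy <-]]; exists (c *: x + y).
  by split; [exact: (lo_dom hGl) | exact: (lo_lin hGl)].
- move=> u l hu hl.
  have /choice [x hx] : forall n, exists x, dG x /\ perpK ip0 dG G x /\ G x = u n.
    by move=> n; apply: B_ex.
  have cau : ncauchy ip0 x.
    move=> e e0.
    have e1 : 0 < e / (Cp + 1) / 2 by rewrite !divr_gt0 // ltr_pwDr.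
    have [N hN] := hl _ e1.
    exists N => a b ha hb.
    have [dxa [pxa Gxa]] := hx a; have [dxb [pxb Gxb]] := hx b.
    have pd : perpK ip0 dG G (x a - x b) by move=> k hk; rewrite (ipBl hH0) pxa // pxb // subrr.
    have := hCp _ ((lo_domB hGl) _ _ dxa dxb) pd; rewrite (lo_B hGl) // Gxa Gxb => h1.
    have h2 := hnormDB hH1 (u a) l (u b); rewrite (hnormB hH1 l (u b)) in h2.
    have h3 := hN a ha; have h4 := hN b hb.
    have h5 : nm1 (u a - u b) < e / (Cp + 1) by lra.
    have : (Cp + 1) * nm1 (u a - u b) < e by rewrite mulrC -ltr_pdivlMr // ltr_pwDr.
    have : Cp * nm1 (u a - u b) <= (Cp + 1) * nm1 (u a - u b).
      by apply: ler_wpM2r; [exact: hnorm_ge0 | lra].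
    lra.
  have [x' hx'] := complete hH0 cau.
  have Gc : ncvg ip1 (fun n => G (x n)) l.
    by rewrite ncvgE; apply: rcvg0_le hl => n; rewrite (hx n).2.2.
  have [dx' Gx'] := hGcl hG (fun n => (hx n).1) hx' Gc.
  by exists x'.
Qed.

Local Notation Pr := (proj_ran ip1 dG G).

Lemma Pr_spec y : rn (Pr y) /\ forall q, rn q -> ip1 (y - Pr y) q = 0.
Proof. exact: (xgetPex 0 (proj_ex hH1 y ran_csub)). Qed.

Lemma Pr_eq y p : rn p -> (forall q, rn q -> ip1 (y - p) q = 0) -> Pr y = p.
Proof.
move=> rp hp; have [rP hP] := Pr_spec y.
have [_ Rlin _] := ran_csub.
have rd : rn (Pr y - p) by rewrite addrC -scaleN1r; apply: Rlin.
apply/eqP; rewrite -subr_eq0; apply/eqP; apply: (ip_def hH1).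
have e : Pr y - p = (y - p) - (y - Pr y) by rewrite opprB [RHS]addrC [RHS]addrA subrK.
by rewrite {1}e (ipBl hH1) hp // hP // subrr.
Qed.

Lemma Pr_id y : rn y -> Pr y = y.
Proof. by move=> ry; apply: Pr_eq => // q _; rewrite subrr (ip0l hH1). Qed.

Lemma Pr_ran y : rn (Pr y). Proof. exact: (Pr_spec y).1. Qed.

Lemma Pr_orth y q : rn q -> ip1 (y - Pr y) q = 0. Proof. exact: (Pr_spec y).2. Qed.

Lemma Pr_ip y q : rn q -> ip1 (Pr y) q = ip1 y q.
Proof.
move=> rq; have := Pr_orth y rq; rewrite (ipBl hH1) => /eqP; rewrite subr_eq0 => /eqP.
by move=> ->.
Qed.

Lemma Pr_lin c x y : Pr (c *: x + y) = c *: Pr x + Pr y.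
Proof.
have [_ Rlin _] := ran_csub.
apply: Pr_eq; first by apply: Rlin; apply: Pr_ran.
move=> q rq.
have -> : c *: x + y - (c *: Pr x + Pr y) = c *: (x - Pr x) + (y - Pr y).
  by rewrite scalerBr opprD addrACA.
by rewrite (ip_lin hH1) !Pr_orth // mulr0 addr0.
Qed.

Lemma Pr_B x y : Pr (x - y) = Pr x - Pr y.
Proof. by rewrite addrC -scaleN1r Pr_lin scaleN1r addrC. Qed.

Lemma Pr_norm y : nm1 (Pr y) <= nm1 y.
Proof.
have e := ip_expand hH1 (Pr y) (y - Pr y).
rewrite addrC subrK in e.
have : ip1 (Pr y) (y - Pr y) = 0.
  by rewrite (ip_sym hH1) Pr_orth ?conjc0 //; exact: Pr_ran.
move=> h; rewrite h /= -(hnorm_sqr hH1) in e.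
rewrite -(@ler_pXn2r _ 2) ?nnegrE ?hnorm_ge0 //.
have := sqr_ge0 (nm1 (y - Pr y)); lra.
Qed.

End GOp2.

Section LM.
Variable R : realType.
Local Notation C := (complex R).
Variables H0 H1 : lmodType C.
Variable ip0 : H0 -> H0 -> C.
Variable ip1 : H1 -> H1 -> C.
Hypothesis hH0 : is_hilbert ip0.
Hypothesis hH1 : is_hilbert ip1.
Variable dG : H0 -> Prop.
Variable G : H0 -> H1.
Hypothesis hG : densely_defined_closed ip0 ip1 dG G.
Hypothesis hcomp : compact_embedding ip0 ip1 dG G.
Local Notation nm0 := (hnorm ip0).
Local Notation nm1 := (hnorm ip1).
Local Notation hGl := (hGlin hG).
Local Notation rn := (ran dG G).
Local Notation Pr := (proj_ran ip1 dG G).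
Variable b : H1 -> H1.
Variable mu : R.
Hypothesis hb : bounded_op ip1 b.
Hypothesis hmu : 0 < mu.
Hypothesis hre : re_ge ip1 b mu.

Let rcs := ran_csub hH0 hH1 hG hcomp.
Lemma rn_lin c x y : rn x -> rn y -> rn (c *: x + y).
Proof. by case: rcs => _ h _; apply: h. Qed.
Lemma rn_B x y : rn x -> rn y -> rn (x - y).
Proof. by move=> hx hy; rewrite addrC -scaleN1r; apply: rn_lin. Qed.
Lemma rn0 : rn 0. Proof. by case: rcs. Qed.

Lemma b_lin c x y : b (c *: x + y) = c *: b x + b y.
Proof. by case: hb => h _; apply: h. Qed.
Lemma b0 : b 0 = 0.
Proof.
have := b_lin 1 0 0; rewrite scaler0 addr0 scale1r => h.
by apply: (addrI (b 0)); rewrite addr0 -h.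
Qed.
Lemma b_B x y : b (x - y) = b x - b y.
Proof. by rewrite addrC -scaleN1r b_lin scaleN1r addrC. Qed.

Local Notation T v := (Pr (b v)).

Lemma T_B x y : T (x - y) = T x - T y.
Proof. by rewrite b_B (Pr_B hH0 hH1 hG hcomp). Qed.

Lemma coerc v : rn v -> mu * nm1 v <= nm1 (T v).
Proof.
move=> rv; have h := hre v.
rewrite -(Pr_ip hH0 hH1 hG hcomp _ rv) in h.
have cs := cauchy_schwarz hH1 (T v) v.
have := le_trans (ler_norm _) (cmod_Re (ip1 (T v) v)).
move=> h2.
have h3 : mu * nm1 v ^+ 2 <= nm1 (T v) * nm1 v by lra.
have [v0|vp] := eqVneq (nm1 v) 0.
  by rewrite v0 mulr0; exact: hnorm_ge0.
have vpos : 0 < nm1 v by rewrite lt_def vp hnorm_ge0.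
by move: h3; rewrite expr2 mulrA ler_pM2r.
Qed.

Lemma LM_unique v v' : rn v -> rn v' -> T v = T v' -> v = v'.
Proof.
move=> rv rv' e; apply/eqP; rewrite -subr_eq0; apply/eqP; apply: (hnorm_eq0 hH1).
have := coerc (rn_B rv rv'); rewrite T_B e subrr (hnorm0 hH1) => h.
apply/eqP; rewrite eq_le hnorm_ge0 andbT.
by rewrite -(pmulr_rle0 _ hmu).
Qed.

Lemma LM_ex x : rn x -> exists v, rn v /\ T v = x.
Proof.
move=> rx.
pose N z := exists v, rn v /\ z = T v.
have [Mb [Mbpos hMb]] : exists Mb, 0 <= Mb /\ forall x, nm1 (b x) <= Mb * nm1 x.
  case: hb => _ [M hM]; exists `|M|; split => // y.
  apply: le_trans (hM y) _; apply: ler_wpM2r; [exact: hnorm_ge0 | exact: ler_norm].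
have hN : csub ip1 N.
  split.
  - by exists 0; split; [exact: rn0 | rewrite b0 (Pr_id hH0 hH1 hG hcomp rn0)].
  - move=> c _ _ [v [rv ->]] [w [rw ->]]; exists (c *: v + w); split; first exact: rn_lin.
    by rewrite b_lin (Pr_lin hH0 hH1 hG hcomp).
  - move=> u l hu hl.
    have /choice [v hv] := hu.
    have cau : ncauchy ip1 v.
      move=> e e0; have e1 : 0 < e * mu / 2 by rewrite !divr_gt0 // mulr_gt0.
      have [N0 hN0] := hl _ e1; exists N0 => a c ha hc.
      have h1 := coerc (rn_B (hv a).1 (hv c).1); rewrite T_B -(hv a).2 -(hv c).2 in h1.
      have h2 := hnormDB hH1 (u a) l (u c); rewrite (hnormB hH1 l (u c)) in h2.
      have h3 := hN0 a ha; have h4 := hN0 c hc.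
      have : mu * nm1 (v a - v c) < mu * e by lra.
      by rewrite ltr_pM2l.
    have [v' hv'] := complete hH1 cau.
    have rv' : rn v' by case: rcs => _ _ h; apply: h hv' => n; exact: (hv n).1.
    exists v'; split => //.
    apply: (ncvg_unique hH1 hl); rewrite ncvgE.
    apply: rcvg0_le (rcvg0Z Mbpos hv') => n.
    rewrite (hv n).2 -T_B; apply: le_trans (Pr_norm hH0 hH1 hG hcomp _) _; exact: hMb.
have [z [[v [rv ->]] hz]] := proj_ex hH1 x hN.
set r := x - T v.
have rr : rn r by apply: rn_B => //; exact: (Pr_ran hH0 hH1 hG hcomp).
have hr : ip1 r (T r) = 0 by apply: hz; exists r.
have : mu * nm1 r ^+ 2 <= 0.
  have h := hre r; rewrite -(Pr_ip hH0 hH1 hG hcomp _ rr) (ip_sym hH1) hr conjc0 /= in h.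
  exact: h.
move=> h; exists v; split => //.
have : nm1 r = 0.
  have := sqr_ge0 (nm1 r); move: h; rewrite pmulr_rle0 // => h1 h2.
  have : nm1 r ^+ 2 = 0 by apply/eqP; rewrite eq_le h1 h2.
  by move/eqP; rewrite expf_eq0 /= => /eqP.
move/(hnorm_eq0 hH1); rewrite /r => /eqP; rewrite subr_eq0 => /eqP ->.
by [].
Qed.

Lemma compr_spec x : rn x -> rn (compr_inv ip1 dG G b x) /\ T (compr_inv ip1 dG G b x) = x.
Proof. by move=> rx; apply: (xgetPex 0 (LM_ex rx)). Qed.

Lemma compr_eq x v : rn v -> T v = x -> compr_inv ip1 dG G b x = v.
Proof.
move=> rv e; have rx : rn x by rewrite -e; exact: (Pr_ran hH0 hH1 hG hcomp).
have [r1 e1] := compr_spec rx; apply: LM_unique => //; by rewrite e1.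
Qed.

Lemma compr_bound x : rn x -> mu * nm1 (compr_inv ip1 dG G b x) <= nm1 x.
Proof. by move=> rx; have [r1 e1] := compr_spec rx; rewrite -{2}e1; exact: coerc. Qed.

Lemma compr_B x y : rn x -> rn y ->
  compr_inv ip1 dG G b (x - y) = compr_inv ip1 dG G b x - compr_inv ip1 dG G b y.
Proof.
move=> rx ry; have [r1 e1] := compr_spec rx; have [r2 e2] := compr_spec ry.
by apply: compr_eq; [exact: rn_B | rewrite T_B e1 e2].
Qed.

End LM.

Section BW2.
Variable R : realType.
Local Notation C := (complex R).
Variables H0 H1 : lmodType C.
Variable ip0 : H0 -> H0 -> C.
Variable ip1 : H1 -> H1 -> C.
Hypothesis hH0 : is_hilbert ip0.
Hypothesis hH1 : is_hilbert ip1.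
Variable dG : H0 -> Prop.
Variable G : H0 -> H1.
Hypothesis hG : densely_defined_closed ip0 ip1 dG G.
Hypothesis hcomp : compact_embedding ip0 ip1 dG G.
Local Notation nm0 := (hnorm ip0).
Local Notation nm1 := (hnorm ip1).
Local Notation hGl := (hGlin hG).
Local Notation rn := (ran dG G).
Local Notation Pr := (proj_ran ip1 dG G).
Local Notation perp := (perpK ip0 dG G).

Lemma B_weak (v : nat -> H1) g (u : nat -> H0) u0 :
  (forall k, dG (u k) /\ perp (u k) /\ G (u k) = v k) ->
  dG u0 -> perp u0 -> G u0 = g ->
  wcvg ip1 v g -> wcvg_dom ip0 ip1 dG G u u0.
Proof.
move=> hu du0 pu0 Gu0 hv.
have [Cp [Cp0 hCp]] := poincare hH0 hH1 hG hcomp.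
have /choice [Bf hBf] : forall y, exists x, rn y -> dG x /\ perp x /\ G x = y.
  move=> y; case: (pselect (rn y)) => ry.
    by have [x hx] := B_ex hH0 hH1 hG ry; exists x.
  by exists 0.
have BfP : forall y, dG (Bf (Pr y)) /\ perp (Bf (Pr y)) /\ G (Bf (Pr y)) = Pr y.
  by move=> y; apply: hBf; exact: (Pr_ran hH0 hH1 hG hcomp).
have Bflin : forall c x y, Bf (Pr (c *: x + y)) = c *: Bf (Pr x) + Bf (Pr y).
  move=> c x y; have [d1 [p1 g1]] := BfP x; have [d2 [p2 g2]] := BfP y.
  have [d3 [p3 g3]] := BfP (c *: x + y).
  apply: (B_unique hH0 hG) => //; first exact: (lo_dom hGl).
    by move=> k hk; rewrite (ip_lin hH0) p1 // p2 // mulr0 addr0.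
  by rewrite g3 (lo_lin hGl) // g1 g2 (Pr_lin hH0 hH1 hG hcomp).
have weak_ip0 : forall z, ccvg (fun k => ip0 (u k) z) (ip0 u0 z).
  move=> z.
  pose L y := ip0 z (Bf (Pr y)).
  have Llin : forall c x y, L (c *: x + y) = conjc c * L x + L y.
    by move=> c x y; rewrite /L Bflin (ipDr hH0) (ipZr hH0).
  have Lbd : exists K, forall x, cmod (L x) <= K * nm1 x.
    exists (nm0 z * Cp) => x; apply: le_trans (cauchy_schwarz hH0 _ _) _.
    rewrite -mulrA; apply: ler_wpM2l; first exact: hnorm_ge0.
    have [d1 [p1 g1]] := BfP x.
    apply: le_trans (hCp _ d1 p1) _; rewrite g1.
    by apply: ler_wpM2l => //; exact: (Pr_norm hH0 hH1 hG hcomp).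
  have [r hr] := riesz hH1 Llin Lbd.
  have eu : forall k, u k = Bf (Pr (v k)).
    move=> k; have [d1 [p1 g1]] := hu k; have [d2 [p2 g2]] := BfP (v k).
    apply: (B_unique hH0 hG) => //; rewrite g1 g2 (Pr_id hH0 hH1 hG hcomp) //.
    by exists (u k).
  have eu0 : u0 = Bf (Pr g).
    have [d2 [p2 g2]] := BfP g.
    apply: (B_unique hH0 hG) => //; rewrite Gu0 g2 (Pr_id hH0 hH1 hG hcomp) //.
    by exists u0.
  apply: (@ccvg_eq _ (fun k => ip1 (v k) r)).
    by move=> k; rewrite eu (ip_sym hH0) -/(L (v k)) hr -(ip_sym hH1).
  have -> : ip0 u0 z = ip1 g r by rewrite eu0 (ip_sym hH0) -/(L g) hr -(ip_sym hH1).
  exact: hv.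
split; first by move=> k; case: (hu k).
split => // w dw.
rewrite /graph_ip; apply: ccvgD; first exact: weak_ip0.
apply: (@ccvg_eq _ (fun k => ip1 (v k) (G w))); first by move=> k; rewrite (hu k).2.2.
by rewrite Gu0; exact: hv.
Qed.

End BW2.

Lemma nnpp (P : Prop) : ~ ~ P -> P.
Proof. by move=> h; case: (pselect P) => // /h. Qed.

Lemma extract_inf (Q : nat -> Prop) :
  (forall N, exists n, (N <= n)%N /\ Q n) -> exists s, incr s /\ forall k, Q (s k).
Proof.
move=> /choice [f hf].
pose s := fix s (k : nat) : nat := match k with 0 => f 0%N | k'.+1 => f (s k').+1 end.
exists s; split.
  apply: incr_succ => k /=; exact: (hf _).1.
by case=> [|k] /=; exact: (hf _).2.
Qed.

Lemma real_aux (R : realType) (eps mu Y X : R) : 0 < eps -> 0 < mu -> 0 <= Y ->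
  X < eps * mu / (3 * (Y + 1)) -> X / mu * Y <= eps / 3.
Proof.
move=> e0 m0 Y0 hX.
have Y1 : 0 < Y + 1 by lra.
set d := eps * mu / (3 * (Y + 1)).
have : X / mu * Y <= d / mu * Y.
  apply: ler_wpM2r => //; rewrite ler_pM2r ?invr_gt0 //; exact: ltW.
have -> : d / mu * Y = eps / 3 * (Y / (Y + 1)).
  rewrite /d; field; apply/andP; split; apply/eqP; lra.
have : Y / (Y + 1) <= 1 by rewrite ler_pdivrMr // mul1r; lra.
move=> h1 h2; apply: le_trans h2 _.
by rewrite -[X in _ <= X]mulr1 ler_wpM2l // divr_ge0 //; lra.
Qed.

Theorem proposition6p2 (R : realType) (H0 H1 : lmodType (complex R))
  (ip0 : H0 -> H0 -> complex R) (ip1 : H1 -> H1 -> complex R)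
  (dG : H0 -> Prop) (G : H0 -> H1) (dD : H1 -> Prop) (D : H1 -> H0)
  (a : H1 -> H1) (an : nat -> H1 -> H1) (mu : R) :
  is_hilbert ip0 -> is_hilbert ip1 ->
  densely_defined_closed ip0 ip1 dG G ->
  densely_defined_closed ip1 ip0 dD D ->
  (* -G^* \subset D *)
  (forall (y : H1) (z : H0), adj_graph ip0 ip1 dG G y z -> dD y /\ D y = - z) ->
  compact_embedding ip0 ip1 dG G ->
  bounded_op ip1 a -> (forall n, bounded_op ip1 (an n)) ->
  0 < mu ->
  (forall n, re_ge ip1 (an n) mu) -> re_ge ip1 a mu ->
  cvg_indep_bc ip0 ip1 dG G dD D an a ->
  forall x y : H1, ran dG G x -> ran dG G y ->
    ccvg (fun n => ip1 (compr_inv ip1 dG G (an n) x) y) (ip1 (compr_inv ip1 dG G a x) y).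
Proof.
move=> hH0 hH1 hG hD hadj hcomp ha han hmu hren hrea hcv x y rx ry.
have hDl : lin_op dD D by case: hD.
have PrO := Pr_orth hH0 hH1 hG hcomp.
have PrR := Pr_ran hH0 hH1 hG hcomp.
have PrI := Pr_id hH0 hH1 hG hcomp.
have PrIp := Pr_ip hH0 hH1 hG hcomp.
have rnB := rn_B hH0 hH1 hG hcomp.
have orthD : forall r, (forall q, ran dG G q -> ip1 r q = 0) -> dD r /\ D r = 0.
  move=> r hr; have := hadj r 0 _.
  rewrite oppr0; apply => z dz; rewrite (ip0r hH0) (ip_sym hH1) hr ?conjc0 //.
  by exists z.
set vn := fun n z => compr_inv ip1 dG G (an n) z.
set v := fun z => compr_inv ip1 dG G a z.
have specn := fun n z (rz : ran dG G z) => compr_spec hH0 hH1 hG hcomp (han n) hmu (hren n) rz.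
have spec := fun z (rz : ran dG G z) => compr_spec hH0 hH1 hG hcomp ha hmu hrea rz.
(* the claim on the dense subset *)
have claim : forall x', ran dG G x' -> dD x' ->
    ccvg (fun n => ip1 (vn n x') y) (ip1 (v x') y).
  move=> x' rx' dx'; apply: nnpp => hnc.
  have [e [e0 he]] : exists e : R, 0 < e /\
      ~ exists N : nat, forall n, (N <= n)%N -> cmod (ip1 (vn n x') y - ip1 (v x') y) < e.
    apply: nnpp => h; apply: hnc => e e0; apply: nnpp => h2; apply: h.
    by exists e.
  have [s [si hs]] : exists s, incr s /\ forall k,
      e <= cmod (ip1 (vn (s k) x') y - ip1 (v x') y).
    apply: (extract_inf (Q := fun n => e <= cmod (ip1 (vn n x') y - ip1 (v x') y))).
    move=> N; apply: nnpp => h; apply: he; exists N => n hn.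
    rewrite ltNge; apply/negP => h'; apply: h; exists n; split => //.
  have bnd : forall k, hnorm ip1 (vn (s k) x') <= hnorm ip1 x' / mu.
    move=> k; rewrite ler_pdivlMr // mulrC.
    exact: (compr_bound hH0 hH1 hG hcomp (han _) hmu (hren _) rx').
  have [psi [g [psii hg]]] := weak_compact hH1 bnd.
  set mk := fun k => s (psi k).
  have mki : incr mk by apply: incr_comp.
  set vt := fun k => vn (mk k) x'.
  have rvt : forall k, ran dG G (vt k) by move=> k; exact: (specn _ _ rx').1.
  have rg : ran dG G g.
    have h0 : ip1 g (g - proj_ran ip1 dG G g) = 0.
      apply: (ccvg_unique (hg (g - proj_ran ip1 dG G g))).
      apply: (@ccvg_eq _ (fun _ => 0)) (ccvg_cst 0) => k.
      by rewrite (ip_sym hH1) PrO ?conjc0 //; exact: rvt.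
    have h1 : ip1 (proj_ran ip1 dG G g) (g - proj_ran ip1 dG G g) = 0.
      by rewrite (ip_sym hH1) PrO ?conjc0 //.
    have : g - proj_ran ip1 dG G g = 0.
      by apply: (ip_def hH1); rewrite {1}(ipBl hH1) h0 h1 subrr.
    move/eqP; rewrite subr_eq0 => /eqP ->; exact: PrR.
  have /choice [u hu] : forall k, exists w, dG w /\ perpK ip0 dG G w /\ G w = vt k.
    by move=> k; apply: (B_ex hH0 hH1 hG); exact: rvt.
  have [u0 [du0 [pu0 Gu0]]] := B_ex hH0 hH1 hG rg.
  have hwd := B_weak hH0 hH1 hG hcomp hu du0 pu0 Gu0 hg.
  have hf : wcvg ip0 (fun _ => - D x') (- D x').
    by move=> w; exact: ccvg_cst.
  have hdom : forall k, dD (an (mk k) (G (u k))) /\ - D (an (mk k) (G (u k))) = - D x'.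
    move=> k; rewrite (hu k).2.2.
    set w := an (mk k) (vt k).
    have Pw : proj_ran ip1 dG G w = x' by exact: (specn _ _ rx').2.
    have [dr Dr] := orthD (w - proj_ran ip1 dG G w) (PrO w).
    rewrite Pw in dr Dr.
    have -> : w = x' + (w - x') by rewrite addrC subrK.
    split; first exact: (lo_domD hDl).
    by rewrite (lo_D hDl) // Dr addr0.
  have hconv := hcv mk (- D x') (fun _ => - D x') u0 u mki hf hwd hdom.
  rewrite Gu0 in hconv.
  have ex' : proj_ran ip1 dG G (a g) = x'.
    apply: (Pr_eq hH0 hH1 hG hcomp) => // q rq.
    rewrite (ipBl hH1); apply/eqP; rewrite subr_eq0; apply/eqP.
    apply: (ccvg_unique (hconv q)).
    apply: (@ccvg_eq _ (fun _ => ip1 x' q)) (ccvg_cst _) => k.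
    rewrite (hu k).2.2 -(PrIp (an (mk k) (vt k)) q rq).
    by rewrite /vt /vn /= (specn _ _ rx').2.
  have vg : v x' = g.
    by apply: (compr_eq hH0 hH1 hG hcomp ha hmu hrea rg ex').
  have := hg y; rewrite -vg => /(_ e e0) [N hN].
  have := hN N (leqnn N); have := hs (psi N).
  rewrite /vt /mk /=; lra.
move=> eps e0.
set Y := hnorm ip1 y.
have Y0 : 0 <= Y by exact: hnorm_ge0.
have d0 : 0 < (eps / 3) * mu / (3 * (Y + 1)).
  by rewrite !divr_gt0 ?mulr_gt0 //; lra.
have [_ hDd _] := hD.
have [d [dd hd]] := hDd x _ d0.
set x' := proj_ran ip1 dG G d.
have rx' : ran dG G x' := PrR d.
have dx' : dD x'.
  have [dr _] := orthD (d - x') (PrO d).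
  have -> : x' = d - (d - x') by rewrite opprB addrC subrK.
  exact: (lo_domB hDl).
have hxx : hnorm ip1 (x - x') < (eps / 3) * mu / (3 * (Y + 1)).
  rewrite /x' -{1}(PrI x rx) -(Pr_B hH0 hH1 hG hcomp).
  exact: le_lt_trans (Pr_norm hH0 hH1 hG hcomp _) hd.
have rxx : ran dG G (x - x') by exact: rnB.
have small : forall (b : H1 -> H1), bounded_op ip1 b -> re_ge ip1 b mu ->
    cmod (ip1 (compr_inv ip1 dG G b (x - x')) y) <= eps / 3.
  move=> b hb hre.
  apply: le_trans (cauchy_schwarz hH1 _ _) _.
  have h1 := compr_bound hH0 hH1 hG hcomp hb hmu hre rxx.
  have h2 : hnorm ip1 (compr_inv ip1 dG G b (x - x')) <= hnorm ip1 (x - x') / mu.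
    by rewrite ler_pdivlMr // mulrC.
  apply: le_trans (_ : hnorm ip1 (x - x') / mu * Y <= _).
    by apply: ler_wpM2r.
  have := real_aux (eps := eps) e0 hmu Y0.
  move=> h; apply: h.
  apply: lt_le_trans hxx _.
  rewrite ler_pM2r ?invr_gt0 ?mulr_gt0 //; last by lra.
  rewrite ler_pM2r //; lra.
have [N hN] := claim x' rx' dx' (eps / 3) (divr_gt0 e0 (ltr0Sn _ 2)).
exists N => n hn.
have dec : ip1 (vn n x) y - ip1 (v x) y =
   ip1 (vn n (x - x')) y + (ip1 (vn n x') y - ip1 (v x') y) - ip1 (v (x - x')) y.
  rewrite /vn /v (compr_B hH0 hH1 hG hcomp (han n) hmu (hren n) rx rx').
  rewrite (compr_B hH0 hH1 hG hcomp ha hmu hrea rx rx') !(ipBl hH1).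
  ring.
rewrite /= in dec; rewrite dec.
have c1 := small _ (han n) (hren n); have c2 := small _ ha hrea.
have c3 := hN n hn.
have t1 := cmodD (ip1 (vn n (x - x')) y + (ip1 (vn n x') y - ip1 (v x') y)) (- ip1 (v (x - x')) y).
have t2 := cmodD (ip1 (vn n (x - x')) y) (ip1 (vn n x') y - ip1 (v x') y).
rewrite cmodN in t1.
rewrite /vn /v /= in t1 t2 c3 *.
lra.
Qed.
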